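(* Let $A$ be an infinite set and $I$ a set. The family of projections $(\pi_{i})_{i\in I}$, where $\pi_{i}:A^{I}\to A$, $\pi_{i}(f)=f(i)$, consists of elements of $\mathbf{F}(A,I)$ and freely generates $\mathbf{F}(A,I)$ with respect to the variety $V(\Omega(A))$.
   Context: For each $a\in A$ let $\hat{a}$ be a constant symbol, and for each $n\geq1$ and each $f:A^{n}\to A$ let $\hat{f}$ be an $n$-ary operation symbol. $\Omega(A)$ is the algebra with universe $A$ in which $\hat{a}$ is interpreted as $a$ and $\hat{f}$ as $f$; $V(\Omega(A))$ is the variety it generates. For a set $X$, $\Pi(X)$ is the lattice of partitions of $X$ (ordered by refinement); for $h:X\to Y$, $\Pi(h)$ is the partition of $X$ into nonempty fibers of $h$. For a filter $F$ on $\Pi(X)$, $\Omega(A)^{F}=\{h\in A^{X}:\Pi(h)\in F\}$, a subalgebra of $\Omega(A)^{X}$. For $i_{1},\dots,i_{n}\in I$, $\mathcal{P}_{i_{1},\dots,i_{n}}$ is the partition of $A^{I}$ in which $f,g$ lie in the same block iff $f(i_{k})=g(i_{k})$ for $k=1,\dots,n$. $\mathcal{P}(A,I)$ is the filter on $\Pi(A^{I})$ generated by all such partitions (i.e., all partitions of $A^{I}$ coarser than some $\mathcal{P}_{i_{1},\dots,i_{n}}$), and $\mathbf{F}(A,I)=\Omega(A)^{\mathcal{P}(A,I)}$. *)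

(* Defs.v *)
From Stdlib Require Import FunctionalExtensionality.
From Stdlib Require List.
From mathcomp Require Import all_boot.
Set Implicit Arguments. Unset Strict Implicit. Unset Printing Implicit Defensive.

(* Universal algebra for the signature of Omega(A):                        *)
(*   a constant symbol  \hat a  for each a : A, and                        *)
(*   an (n+1)-ary operation symbol \hat f for each f : A^(n+1) -> A        *)
(*   (arity n.+1 >= 1; A^m is represented as 'I_m -> A).                  *)

Record alg (A : Type) := Alg {
  carrier :> Type;
  cst : A -> carrier;
  op : forall n : nat, (('I_n.+1 -> A) -> A) -> ('I_n.+1 -> carrier) -> carrier
}.

Definition Omega (A : Type) : alg A :=
  @Alg A A (fun a => a) (fun n f x => f x).

Definition hom (A : Type) (B C : alg A) (h : B -> C) : Prop :=
  (forall a, h (@cst A B a) = @cst A C a) /\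
  (forall n (f : ('I_n.+1 -> A) -> A) (x : 'I_n.+1 -> B),
      h (@op A B n f x) = @op A C n f (fun k => h (x k))).

Definition subclosed (A : Type) (B : alg A) (P : B -> Prop) : Prop :=
  (forall a, P (@cst A B a)) /\
  (forall n (f : ('I_n.+1 -> A) -> A) (x : 'I_n.+1 -> B),
      (forall k, P (x k)) -> P (@op A B n f x)).

Definition subalg (A : Type) (B : alg A) (P : B -> Prop) (HP : subclosed P) : alg A :=
  @Alg A {x : B | P x}
    (fun a => exist P (@cst A B a) (proj1 HP a))
    (fun n f x => exist P (@op A B n f (fun k => sval (x k)))
                        (proj2 HP n f _ (fun k => proj2_sig (x k)))).

Definition prodalg (A : Type) (J : Type) (Bs : J -> alg A) : alg A :=
  @Alg A (forall j, Bs j)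
    (fun a j => @cst A (Bs j) a)
    (fun n f x j => @op A (Bs j) n f (fun k => x k j)).

Definition closedH (A : Type) (C : alg A -> Prop) : Prop :=
  forall (B B' : alg A) (h : B -> B'),
    hom h -> (forall y, exists x, h x = y) -> C B -> C B'.
Definition closedS (A : Type) (C : alg A -> Prop) : Prop :=
  forall (B : alg A) (P : B -> Prop) (HP : subclosed P), C B -> C (subalg HP).
Definition closedP (A : Type) (C : alg A -> Prop) : Prop :=
  forall (J : Type) (Bs : J -> alg A), (forall j, C (Bs j)) -> C (prodalg Bs).

Definition variety_generated (A : Type) (K : alg A) (B : alg A) : Prop :=
  forall C : alg A -> Prop,
    closedH C -> closedS C -> closedP C -> C K -> C B.

Definition generates (A : Type) (B : alg A) (I : Type) (x : I -> B) : Prop :=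
  forall P : B -> Prop, subclosed P -> (forall i, P (x i)) -> forall b, P b.

Definition freely_generates (A : Type) (V : alg A -> Prop) (B : alg A)
    (I : Type) (x : I -> B) : Prop :=
  V B /\ generates x /\
  forall C : alg A, V C -> forall g : I -> C,
    exists h : B -> C, hom h /\ forall i, h (x i) = g i.

(* Pi(h) in P(A,I)  iff  Pi(h) is coarser than some P_{i1..in}, i.e.       *)
(* there is a finite list l of indices such that any f, g : A^I agreeing   *)
(* on l lie in the same fiber of h.                                        *)

Definition in_PAI (A I : Type) (h : (I -> A) -> A) : Prop :=
  exists l : list I,
    forall f g : I -> A, (forall i, List.In i l -> f i = g i) -> h f = h g.

Definition OmegaPow (A I : Type) : alg A :=
  @prodalg A (I -> A) (fun _ => Omega A).

Lemma in_PAI_seq (A I : Type) (m : nat) (x : 'I_m -> (I -> A) -> A) :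
  (forall k, in_PAI (x k)) -> forall s : seq 'I_m,
  exists l : list I, forall k, k \in s ->
    forall f g : I -> A, (forall i, List.In i l -> f i = g i) -> x k f = x k g.
Proof.
move=> Hx; elim=> [|k0 s [l Hl]].
  by exists nil => k; rewrite in_nil.
have [l0 Hl0] := Hx k0.
exists (l0 ++ l)%list => k; rewrite in_cons => /orP [/eqP -> | Hk] f g Hfg.
  by apply: Hl0 => i Hi; apply: Hfg; apply: List.in_or_app; left.
by apply: Hl => // i Hi; apply: Hfg; apply: List.in_or_app; right.
Qed.

Lemma in_PAI_closed (A I : Type) : @subclosed A (OmegaPow A I) (@in_PAI A I).
Proof.
split.
  by move=> a; exists nil.
move=> n f x Hx.
have [l Hl] := in_PAI_seq Hx (enum 'I_n.+1).
exists l => g1 g2 Hg /=.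
congr (f _); apply: functional_extensionality => k.
by apply: Hl => //; rewrite mem_enum.
Qed.

Definition FAI (A I : Type) : alg A := subalg (@in_PAI_closed A I).

(* Main.v *)
Require Import Defs.
From Stdlib Require List.
From Stdlib Require Import Classical ClassicalEpsilon FunctionalExtensionality ProofIrrelevance.
From mathcomp Require Import all_boot.
Set Implicit Arguments. Unset Strict Implicit. Unset Printing Implicit Defensive.

Inductive term (A X : Type) : Type :=
| Var : X -> term A X
| Cst : A -> term A X
| Op : forall n, (('I_n.+1 -> A) -> A) -> ('I_n.+1 -> term A X) -> term A X.

Fixpoint eval (A X : Type) (B : alg A) (c : X -> B) (t : term A X) : B :=
  match t with
  | Var x => c x
  | Cst a => @cst A B a
  | Op n F ts => @op A B n F (fun k => eval c (ts k))
  end.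

Definition Qc (A : Type) (C : alg A) : Prop :=
  forall (X : Type) (t1 t2 : term A X),
    (forall v : X -> A, eval (B:=Omega A) v t1 = eval (B:=Omega A) v t2) ->
    forall c : X -> C, eval c t1 = eval c t2.

Lemma eval_hom (A X : Type) (B C : alg A) (h : B -> C) (c : X -> B) t :
  hom h -> eval (fun x => h (c x)) t = h (eval c t).
Proof.
move=> [h1 h2]; elim: t => [x|a|n F ts IH] //=.
rewrite h2; congr (op _ _); apply: functional_extensionality => k; exact: IH.
Qed.

Lemma Qc_H (A : Type) : closedH (@Qc A).
Proof.
move=> B B' h hh surj QB X t1 t2 Ht c'.
pose c := fun x => proj1_sig (constructive_indefinite_description _ (surj (c' x))).
have -> : c' = fun x => h (c x).
  apply: functional_extensionality => x.
  by rewrite /c; case: (constructive_indefinite_description _ _).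
by rewrite !eval_hom // (QB _ _ _ Ht).
Qed.

Lemma eval_sub (A X : Type) (B : alg A) (P : B -> Prop) (HP : subclosed P)
  (c : X -> subalg HP) t :
  sval (eval c t) = eval (fun x => sval (c x)) t.
Proof.
elim: t => [x|a|n F ts IH] //=.
congr (op _ _); apply: functional_extensionality => k; exact: IH.
Qed.

Lemma Qc_S (A : Type) : closedS (@Qc A).
Proof.
move=> B P HP QB X t1 t2 Ht c.
have E : sval (eval c t1) = sval (eval c t2).
  by rewrite !eval_sub; apply: QB.
move: E; case: (eval c t1) => x1 p1; case: (eval c t2) => x2 p2 /= E.
exact: subset_eq_compat.
Qed.

Lemma eval_prod (A X J : Type) (Bs : J -> alg A) (c : X -> prodalg Bs) t j :
  eval c t j = eval (fun x => c x j) t.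
Proof.
elim: t => [x|a|n F ts IH] //=.
congr (op _ _); apply: functional_extensionality => k; exact: IH.
Qed.

Lemma Qc_P (A : Type) : closedP (@Qc A).
Proof.
move=> J Bs QB X t1 t2 Ht c.
apply: functional_extensionality_dep => j.
by rewrite !eval_prod; apply: QB.
Qed.

Lemma Qc_Omega (A : Type) : Qc (Omega A).
Proof. by move=> X t1 t2 Ht c; apply: Ht. Qed.

Lemma V_Qc (A : Type) (C : alg A) : variety_generated (Omega A) C -> Qc C.
Proof. move=> HV; apply: (HV (@Qc A)); [exact: Qc_H|exact: Qc_S|exact: Qc_P|exact: Qc_Omega]. Qed.

Lemma rep (A I : Type) (a0 : A) (b : FAI A I) :
  exists t : term A I, forall f, eval (B:=Omega A) f t = sval b f.
Proof.
case: b => H [l Hl] /=.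
case: l Hl => [|i0 l'] Hl.
  exists (Cst I (H (fun _ => a0))) => f /=; apply: Hl => i [].
pose F := fun v : 'I_(length l').+1 -> A =>
  H (epsilon (inhabits (fun _ : I => a0))
       (fun f => forall k : 'I_(length l').+1, f (List.nth k (i0 :: l') i0) = v k)).
exists (Op F (fun k : 'I_(length l').+1 => Var A (List.nth k (i0 :: l') i0))) => f /=.
rewrite /F; apply: Hl => i Hi.
set e := epsilon _ _.
have : forall k : 'I_(length l').+1, e (List.nth k (i0 :: l') i0) = f (List.nth k (i0 :: l') i0).
  apply: (epsilon_spec (inhabits (fun _ : I => a0))
     (fun f' => forall k : 'I_(length l').+1, f' (List.nth k (i0 :: l') i0) = f (List.nth k (i0 :: l') i0))).
  by exists f.
move=> He.
have [k [Hk Hn]] := List.In_nth _ _ i0 Hi.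
have Hk' : k < (length l').+1 by apply/ltP.
by rewrite -Hn; exact: (He (Ordinal Hk')).
Qed.

Theorem mainTheorem4 (A I : Type)
    (HA : ~ exists s : list A, forall a : A, List.In a s) :
  exists Hpi : forall i : I, in_PAI (fun f : I -> A => f i),
    @freely_generates A (variety_generated (Omega A)) (FAI A I) I
      (fun i : I => exist (@in_PAI A I) (fun f : I -> A => f i) (Hpi i)
         : FAI A I).
Proof.
have [a0 _] : exists a : A, True.
  apply: NNPP => Hn; apply: HA; exists nil => a; apply: Hn; by exists a.
have Hpi : forall i : I, in_PAI (fun f : I -> A => f i).
  move=> i; exists (i :: nil) => f g Hfg; apply: Hfg; by left.
exists Hpi.
pose pi : I -> FAI A I := fun i : I => exist (@in_PAI A I) (fun f : I -> A => f i) (Hpi i).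
have evalF : forall t : term A I, sval (eval (B:=FAI A I) pi t) = fun f => eval (B:=Omega A) f t.
  elim=> [x|a|n F ts IH] //=.
  apply: functional_extensionality => f; congr (F _).
  apply: functional_extensionality => k; by rewrite IH.
have repr : forall b : FAI A I, b = eval (B:=FAI A I) pi (proj1_sig (constructive_indefinite_description _ (rep a0 b))).
  move=> b; case: (constructive_indefinite_description _ _) => t Ht /=.
  move: (evalF t); case: (eval (B:=FAI A I) pi t) => y py /= Ey.
  case: b Ht => x px /= Ht; apply: subset_eq_compat; rewrite Ey.
  by apply: functional_extensionality => f; rewrite Ht.
split.
  move=> C HH HS HP HK.
  exact: (HS (OmegaPow A I) (@in_PAI A I) (@in_PAI_closed A I) (HP _ _ (fun _ => HK))).
split.
  move=> P [Pc Po] Pi b; rewrite (repr b).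
  elim: (proj1_sig _) => [x|a|n F ts IH] /=; [exact: Pi|exact: Pc|exact: Po].
move=> C HC g.
have QC := V_Qc HC.
pose tb := fun b : FAI A I => proj1_sig (constructive_indefinite_description _ (rep a0 b)).
have Htb : forall b f, eval (B:=Omega A) f (tb b) = sval b f.
  by move=> b; rewrite /tb; case: (constructive_indefinite_description _ _).
exists (fun b => eval g (tb b)); split; last first.
  move=> i; rewrite (QC _ _ (Var A i) _ g) //.
split.
  move=> a; rewrite (QC _ _ (Cst I a) _ g) //.
move=> n F x.
rewrite (QC _ _ (Op F (fun k => tb (x k))) _ g) //.
move=> v /=; rewrite Htb /=; congr (F _).
by apply: functional_extensionality => k; rewrite Htb.
Qed.
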